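(* Let $A$ (in $\mathcal H$) and $B$ (in $\mathcal K$) be closed densely defined operators with $A\dashv B$ via a (possibly unbounded) intertwining operator $T$. Then: (i) $\sigma_p(A)\subseteq\sigma_p(B)$; if $\xi\in D(A)$ is an eigenvector of $A$ for eigenvalue $\lambda$, then $T\xi$ is an eigenvector of $B$ for $\lambda$; hence for every $\lambda\in\sigma_p(A)$ the multiplicities satisfy $m_A(\lambda)\le m_B(\lambda)$; (ii) if $TD(A)=D(B)$ and $T^{-1}$ is bounded, then $\sigma_p(A)=\sigma_p(B)$; (iii) if $T^{-1}$ is bounded and $TD(A)$ is a core for $B$, then $\sigma_p(B)\subseteq\sigma(A)$.
   Context: A closed densely defined operator $T:D(T)\subseteq\mathcal H\to\mathcal K$ is an intertwining operator for $A$ and $B$ if $D(A)\subseteq D(T)$ and $AD(A)\subseteq D(T)$, $TD(A)\subseteq D(B)$, and $BT\xi=TA\xi$ for all $\xi\in D(A)$. $A\dashv B$ means there is such an intertwining operator $T$, injective with densely defined inverse $T^{-1}$ (defined on $R(T)$). $\sigma_p$ denotes the set of eigenvalues, $m_A(\lambda)$ the dimension of $\ker(A-\lambda I)$, and $\sigma(A)$ the spectrum (complement of the set of $\lambda$ for which $A-\lambda I$ has a bounded everywhere defined inverse). *)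

(* Defs.v *)
From Stdlib Require Import Reals.
Open Scope R_scope.
Set Implicit Arguments.

Definition C : Type := (R * R)%type.
Definition C0 : C := (0, 0).
Definition C1 : C := (1, 0).
Definition Cadd (a b : C) : C := (fst a + fst b, snd a + snd b).
Definition Copp (a : C) : C := (- fst a, - snd a).
Definition Cmul (a b : C) : C :=
  (fst a * fst b - snd a * snd b, fst a * snd b + snd a * fst b).
Definition Cconj (a : C) : C := (fst a, - snd a).

Record Hilbert := {
  hcar :> Type;
  hadd : hcar -> hcar -> hcar;
  hzero : hcar;
  hopp : hcar -> hcar;
  hscal : C -> hcar -> hcar;
  inner : hcar -> hcar -> C;
  hadd_assoc : forall x y z, hadd x (hadd y z) = hadd (hadd x y) z;
  hadd_comm : forall x y, hadd x y = hadd y x;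
  hadd_0 : forall x, hadd x hzero = x;
  hadd_opp : forall x, hadd x (hopp x) = hzero;
  hscal_1 : forall x, hscal C1 x = x;
  hscal_assoc : forall a b x, hscal a (hscal b x) = hscal (Cmul a b) x;
  hscal_addv : forall a x y, hscal a (hadd x y) = hadd (hscal a x) (hscal a y);
  hscal_adds : forall a b x, hscal (Cadd a b) x = hadd (hscal a x) (hscal b x);
  inner_add : forall x y z, inner (hadd x y) z = Cadd (inner x z) (inner y z);
  inner_scal : forall a x y, inner (hscal a x) y = Cmul a (inner x y);
  inner_conj : forall x y, inner y x = Cconj (inner x y);
  inner_pos : forall x, 0 <= fst (inner x x);
  inner_def : forall x, inner x x = C0 -> x = hzero;
  hcomplete : forall u : nat -> hcar,
    (forall eps, 0 < eps -> exists N, forall m n, (N <= m)%nat -> (N <= n)%nat ->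
       sqrt (fst (inner (hadd (u m) (hopp (u n))) (hadd (u m) (hopp (u n))))) < eps) ->
    exists l, forall eps, 0 < eps -> exists N, forall n, (N <= n)%nat ->
       sqrt (fst (inner (hadd (u n) (hopp l)) (hadd (u n) (hopp l)))) < eps
}.

Arguments hadd {h}. Arguments hzero {h}. Arguments hopp {h}.
Arguments hscal {h}. Arguments inner {h}.

Definition hsub {H : Hilbert} (x y : H) : H := hadd x (hopp y).
Definition hnorm {H : Hilbert} (x : H) : R := sqrt (fst (inner x x)).

Definition converges {H : Hilbert} (u : nat -> H) (l : H) : Prop :=
  forall eps, 0 < eps -> exists N, forall n, (N <= n)%nat -> hnorm (hsub (u n) l) < eps.

Definition dense {H : Hilbert} (S : H -> Prop) : Prop :=
  forall x eps, 0 < eps -> exists y, S y /\ hnorm (hsub x y) < eps.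

(* An operator T : D(T) ⊆ H -> K; the values of [app] outside [dom] are irrelevant. *)
Record op (H K : Hilbert) := { dom : H -> Prop; app : H -> K }.
Arguments dom {H K}. Arguments app {H K}.

Definition linear_op {H K : Hilbert} (T : op H K) : Prop :=
  dom T hzero /\
  (forall x y, dom T x -> dom T y -> dom T (hadd x y)) /\
  (forall a x, dom T x -> dom T (hscal a x)) /\
  (forall x y, dom T x -> dom T y -> app T (hadd x y) = hadd (app T x) (app T y)) /\
  (forall a x, dom T x -> app T (hscal a x) = hscal a (app T x)).

Definition closed_op {H K : Hilbert} (T : op H K) : Prop :=
  linear_op T /\
  forall (u : nat -> H) x y,
    (forall n, dom T (u n)) -> converges u x -> converges (fun n => app T (u n)) y ->
    dom T x /\ app T x = y.

Definition densely_defined {H K : Hilbert} (T : op H K) : Prop := dense (dom T).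

Definition closed_densely_defined {H K : Hilbert} (T : op H K) : Prop :=
  closed_op T /\ densely_defined T.

Definition intertwining {H K : Hilbert} (A : op H H) (B : op K K) (T : op H K) : Prop :=
  closed_densely_defined T /\
  (forall x, dom A x -> dom T x) /\
  (forall x, dom A x -> dom T (app A x)) /\
  (forall x, dom A x -> dom B (app T x)) /\
  (forall x, dom A x -> app B (app T x) = app T (app A x)).

Definition injective_op {H K : Hilbert} (T : op H K) : Prop :=
  forall x y, dom T x -> dom T y -> app T x = app T y -> x = y.

Definition range {H K : Hilbert} (T : op H K) (y : K) : Prop :=
  exists x, dom T x /\ app T x = y.

(* T injective with densely defined inverse T^{-1} : R(T) -> H *)
Definition inv_densely_defined {H K : Hilbert} (T : op H K) : Prop := dense (range T).

Definition quasi_affine_via {H K : Hilbert} (A : op H H) (B : op K K) (T : op H K) : Prop :=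
  intertwining A B T /\ injective_op T /\ inv_densely_defined T.

Definition inv_bounded {H K : Hilbert} (T : op H K) : Prop :=
  exists c, 0 <= c /\ forall x, dom T x -> hnorm x <= c * hnorm (app T x).

Definition shift_app {H : Hilbert} (A : op H H) (l : C) (x : H) : H :=
  hsub (app A x) (hscal l x).

Definition eigenvector {H : Hilbert} (A : op H H) (l : C) (x : H) : Prop :=
  dom A x /\ x <> hzero /\ app A x = hscal l x.

Definition point_spectrum {H : Hilbert} (A : op H H) (l : C) : Prop :=
  exists x, eigenvector A l x.

Definition resolvent_set {H : Hilbert} (A : op H H) (l : C) : Prop :=
  exists S : H -> H,
    (forall x y, S (hadd x y) = hadd (S x) (S y)) /\
    (forall a x, S (hscal a x) = hscal a (S x)) /\
    (exists c, 0 <= c /\ forall x, hnorm (S x) <= c * hnorm x) /\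
    (forall x, dom A (S x) /\ shift_app A l (S x) = x) /\
    (forall x, dom A x -> S (shift_app A l x) = x).

Definition spectrum {H : Hilbert} (A : op H H) (l : C) : Prop := ~ resolvent_set A l.

Fixpoint lincomb {H : Hilbert} (n : nat) (c : nat -> C) (v : nat -> H) : H :=
  match n with
  | O => hzero
  | S k => hadd (lincomb k c v) (hscal (c k) (v k))
  end.

Definition lin_indep {H : Hilbert} (n : nat) (v : nat -> H) : Prop :=
  forall c : nat -> C, lincomb n c v = hzero -> forall i, (i < n)%nat -> c i = C0.

Definition in_kernel {H : Hilbert} (A : op H H) (l : C) (x : H) : Prop :=
  dom A x /\ shift_app A l x = hzero.

Definition mult_ge {H : Hilbert} (A : op H H) (l : C) (n : nat) : Prop :=
  exists v : nat -> H, (forall i, (i < n)%nat -> in_kernel A l (v i)) /\ lin_indep n v.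

(* m_A(λ) <= m_B(λ), comparison in {0,1,...,∞} *)
Definition mult_le {H K : Hilbert} (A : op H H) (B : op K K) (l : C) : Prop :=
  forall n, mult_ge A l n -> mult_ge B l n.

(* D0 is a core for the closed operator B: D0 ⊆ D(B) and B|D0 has closure B,
   i.e. D0 is dense in D(B) for the graph norm *)
Definition core {K : Hilbert} (B : op K K) (D0 : K -> Prop) : Prop :=
  (forall y, D0 y -> dom B y) /\
  forall y eps, dom B y -> 0 < eps ->
    exists z, D0 z /\ hnorm (hsub y z) + hnorm (hsub (app B y) (app B z)) < eps.

Definition image_dom {H K : Hilbert} (A : op H H) (T : op H K) (y : K) : Prop :=
  exists x, dom A x /\ app T x = y.

(* Main.v *)
Require Import Defs.
From Stdlib Require Import Reals Lra Lia ClassicalEpsilon.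
Open Scope R_scope.
Lemma pair_eq (a b c d : R) : a = c -> b = d -> (a, b) = (c, d).
Proof. intros; subst; reflexivity. Qed.

Section Grp.
Variable H : Hilbert.
Implicit Types x y z : H.

Lemma add0l x : hadd hzero x = x.
Proof. rewrite hadd_comm; apply hadd_0. Qed.

Lemma add_cancel_l x y z : hadd x y = hadd x z -> y = z.
Proof.
  intros E. assert (E2 : hadd (hopp x) (hadd x y) = hadd (hopp x) (hadd x z)) by (rewrite E; auto).
  rewrite !hadd_assoc, (hadd_comm _ (hopp x) x), hadd_opp, !add0l in E2. exact E2.
Qed.

Lemma opp_unique x y : hadd x y = hzero -> y = hopp x.
Proof. intros E. apply (add_cancel_l x). rewrite E, hadd_opp. auto. Qed.

Lemma idem_zero x : hadd x x = x -> x = hzero.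
Proof. intros E. apply (add_cancel_l x). rewrite hadd_0. exact E. Qed.

Lemma scal0v a : hscal a (@hzero H) = hzero.
Proof. apply idem_zero. rewrite <- hscal_addv, hadd_0. auto. Qed.

Lemma scals0 x : hscal Defs.C0 x = hzero.
Proof. apply idem_zero. rewrite <- hscal_adds. f_equal. unfold Cadd, Defs.C0; simpl; apply pair_eq; ring. Qed.

Lemma scal_opp a x : hscal a (hopp x) = hopp (hscal a x).
Proof. apply opp_unique. rewrite <- hscal_addv, hadd_opp. apply scal0v. Qed.

Lemma opp_scal x : hopp x = hscal (-1, 0) x.
Proof. symmetry. apply opp_unique. rewrite <- (hscal_1 H x) at 1. rewrite <- hscal_adds.
  replace (Cadd Defs.C1 (-1,0)) with Defs.C0. apply scals0. unfold Cadd, Defs.C1, Defs.C0; simpl; apply pair_eq; ring. Qed.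

Lemma opp_zero : hopp (@hzero H) = hzero.
Proof. symmetry. apply opp_unique. apply hadd_0. Qed.

Lemma opp_opp x : hopp (hopp x) = x.
Proof. symmetry. apply opp_unique. rewrite hadd_comm. apply hadd_opp. Qed.

Lemma opp_add x y : hopp (hadd x y) = hadd (hopp x) (hopp y).
Proof. symmetry. apply opp_unique.
  rewrite (hadd_comm _ (hopp x)), hadd_assoc, <- (hadd_assoc _ x y), hadd_opp, hadd_0, hadd_opp. auto. Qed.

Lemma sub_eq0 x y : hsub x y = hzero -> x = y.
Proof. unfold hsub. intros E. apply opp_unique in E. rewrite <- (opp_opp y), E, opp_opp. auto. Qed.

Lemma inner_add_r x y z : inner x (hadd y z) = Cadd (inner x y) (inner x z).
Proof. rewrite inner_conj, inner_add, (inner_conj _ y x), (inner_conj _ z x).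
  destruct (inner y x), (inner z x); unfold Cconj, Cadd; simpl. apply pair_eq; ring. Qed.

Lemma inner_scal_r a x y : inner x (hscal a y) = Cmul (Cconj a) (inner x y).
Proof. rewrite inner_conj, inner_scal, (inner_conj _ y x).
  destruct (inner y x), a; unfold Cconj, Cmul; simpl. apply pair_eq; ring. Qed.

Lemma inner_self_snd x : snd (inner x x) = 0.
Proof. pose proof (inner_conj H x x) as E. destruct (inner x x) as [p q].
  unfold Cconj in E; simpl in *. injection E; intros; lra. Qed.

Definition nsq x := fst (inner x x).

Lemma nsq_ge0 x : 0 <= nsq x.
Proof. apply inner_pos. Qed.

Lemma hnorm_sq x : hnorm x * hnorm x = nsq x.
Proof. unfold hnorm. apply sqrt_sqrt, nsq_ge0. Qed.

Lemma hnorm_ge0 x : 0 <= hnorm x.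
Proof. apply sqrt_pos. Qed.

Lemma nsq_scal a x : nsq (hscal a x) = (fst a * fst a + snd a * snd a) * nsq x.
Proof. unfold nsq. rewrite inner_scal, inner_scal_r.
  pose proof (inner_self_snd x). destruct (inner x x) as [p q], a as [a1 a2].
  simpl in *. subst. ring. Qed.

Lemma nsq_opp x : nsq (hopp x) = nsq x.
Proof. rewrite opp_scal, nsq_scal. simpl. ring. Qed.

Lemma hnorm_opp x : hnorm (hopp x) = hnorm x.
Proof. unfold hnorm. fold (nsq (hopp x)). rewrite nsq_opp. auto. Qed.

Lemma nsq_add x y : nsq (hadd x y) = nsq x + nsq y + 2 * fst (inner x y).
Proof. unfold nsq. rewrite inner_add, !inner_add_r, (inner_conj _ x y).
  destruct (inner x y); simpl. unfold Cconj; simpl. ring. Qed.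

Lemma nsq_sub_le x y : nsq (hsub x y) <= 2 * nsq x + 2 * nsq y.
Proof. unfold hsub. rewrite nsq_add, nsq_opp.
  pose proof (nsq_add x y). pose proof (nsq_ge0 (hadd x y)).
  rewrite opp_scal, inner_scal_r. destruct (inner x y) as [p q]. simpl in *.
  pose proof (nsq_ge0 x); pose proof (nsq_ge0 y). nra. Qed.

End Grp.

Lemma sub_identity (H : Hilbert) (u v p : H) : hsub u v = hsub (hsub p v) (hsub p u).
Proof.
  unfold hsub. rewrite opp_add, opp_opp.
  rewrite <- (hadd_assoc _ p (hopp v)). rewrite (hadd_assoc _ (hopp v)).
  rewrite (hadd_comm _ (hopp v) (hopp p)). rewrite <- (hadd_assoc _ (hopp p)).
  rewrite (hadd_assoc _ p (hopp p)), hadd_opp, add0l. apply hadd_comm.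
Qed.

Lemma sub_swap (H : Hilbert) (y z : H) : hsub z y = hopp (hsub y z).
Proof. unfold hsub. rewrite opp_add, opp_opp. apply hadd_comm. Qed.

Lemma sub0 (H : Hilbert) (x : H) : hsub x hzero = x.
Proof. unfold hsub. rewrite opp_zero. apply hadd_0. Qed.

Section Ops.
Variables H K : Hilbert.
Variable T : op H K.
Hypothesis linT : linear_op T.

Lemma T_zero : app T hzero = hzero.
Proof. destruct linT as [d0 [dadd [dsc [aadd asc]]]].
  apply idem_zero. rewrite <- aadd by auto. rewrite hadd_0. auto. Qed.

Lemma T_opp x : dom T x -> dom T (hopp x) /\ app T (hopp x) = hopp (app T x).
Proof. destruct linT as [d0 [dadd [dsc [aadd asc]]]]. intros dx.
  assert (D : dom T (hopp x)) by (rewrite opp_scal; auto).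
  split; auto. apply opp_unique. rewrite <- aadd by auto. rewrite hadd_opp. apply T_zero. Qed.

Lemma T_sub x y : dom T x -> dom T y -> dom T (hsub x y) /\ app T (hsub x y) = hsub (app T x) (app T y).
Proof. destruct linT as [d0 [dadd [dsc [aadd asc]]]]. intros dx dy.
  destruct (T_opp y dy) as [D E]. unfold hsub. split; auto. rewrite aadd, E by auto. auto. Qed.

Lemma T_lincomb n c v : (forall i, (i < n)%nat -> dom T (v i)) ->
  dom T (lincomb n c v) /\ app T (lincomb n c v) = lincomb n c (fun i => app T (v i)).
Proof. destruct linT as [d0 [dadd [dsc [aadd asc]]]].
  induction n; intros Hv; simpl.
  - split; auto. apply T_zero.
  - destruct IHn as [D E]. { intros; apply Hv; lia. }
    assert (dom T (v n)) by (apply Hv; lia).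
    split; auto. rewrite aadd, E, asc by auto. auto. Qed.
End Ops.

Lemma scal_sub (H : Hilbert) a (x y : H) : hscal a (hsub x y) = hsub (hscal a x) (hscal a y).
Proof. unfold hsub. rewrite hscal_addv, scal_opp. auto. Qed.

Lemma conv_inv (g : nat -> R) : (forall n, g n <= / (INR n + 1)) ->
  forall eps, 0 < eps -> exists N, forall n, (N <= n)%nat -> g n < eps.
Proof.
  intros Hg eps He. destruct (INR_archimed eps 1 He) as [N HN]. exists N.
  intros n Hn. apply le_INR in Hn. pose proof (pos_INR N).
  eapply Rle_lt_trans; [apply Hg|].
  apply (Rmult_lt_reg_l (INR n + 1)); [lra|]. rewrite Rinv_r by lra. nra.
Qed.

Theorem proposition3p18 (H K : Hilbert) (A : op H H) (B : op K K) (T : op H K) :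
  closed_densely_defined A -> closed_densely_defined B ->
  quasi_affine_via A B T ->
  (* (i) *)
  ((forall l, point_spectrum A l -> point_spectrum B l) /\
   (forall l x, eigenvector A l x -> eigenvector B l (app T x)) /\
   (forall l, point_spectrum A l -> mult_le A B l)) /\
  (* (ii) *)
  ((forall y, image_dom A T y <-> dom B y) -> inv_bounded T ->
   forall l, point_spectrum A l <-> point_spectrum B l) /\
  (* (iii) *)
  (inv_bounded T -> core B (image_dom A T) ->
   forall l, point_spectrum B l -> spectrum A l).
Proof.
  intros _ _ [[[[linT clT] _] [AT [AAT [ATB comm]]]] [injT _]].
  pose proof linT as [d0 [dadd [dsc [aadd asc]]]].
  assert (EIG : forall l x, eigenvector A l x -> eigenvector B l (app T x)).
  { intros l x [dA [xne Ax]]. split; [auto|split].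
    - intros E. apply xne. apply injT; auto. rewrite E. symmetry. apply (T_zero _ _ T linT).
    - rewrite comm, Ax by auto. apply asc; auto. }
  split; [split; [|split]|split].
  - intros l [x Hx]. exists (app T x). auto.
  - exact EIG.
  - intros l _ n [v [Hk Hi]]. exists (fun i => app T (v i)). split.
    + intros i Hin. destruct (Hk i Hin) as [dA E]. unfold shift_app in E.
      apply sub_eq0 in E. split; auto. unfold shift_app.
      rewrite comm, E, asc by auto. unfold hsub. apply hadd_opp.
    + intros c E i Hin. apply Hi; auto.
      assert (Dv : forall i, (i < n)%nat -> dom T (v i)) by (intros j Hj; apply AT, Hk, Hj).
      destruct (T_lincomb _ _ T linT n c v Dv) as [D E2]. rewrite <- E2 in E.
      apply injT; auto. rewrite E. symmetry. apply (T_zero _ _ T linT).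
  - intros Heq _ l. split.
    + intros [x Hx]. exists (app T x). auto.
    + intros [y [dB [yne By]]]. destruct (proj2 (Heq y) dB) as [x [dA Txy]].
      subst y. exists x. split; [auto|split].
      * intros E; subst x. apply yne. apply (T_zero _ _ T linT).
      * apply injT; auto. rewrite <- comm, By by auto. symmetry; auto.
  - intros [c' [c'0 Hinv]] [coreD coreA] l [y [dBy [yne By]]]
      [S [_ [_ [[c [c0 Sb]] [SA SK]]]]].
    set (lm := fst l * fst l + snd l * snd l).
    assert (lm0 : 0 <= lm) by (unfold lm; nra).
    set (Kc := sqrt (2 * lm + 2)).
    assert (Kc0 : 0 <= Kc) by apply sqrt_pos.
    set (M := c * c' * Kc + 1).
    assert (M1 : 1 <= M) by (unfold M; pose proof (Rmult_le_pos _ _ (Rmult_le_pos _ _ c0 c'0) Kc0); lra).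
    set (dl := fun n : nat => / (INR n + 1) / M).
    assert (dl0 : forall n, 0 < dl n).
    { intros n. unfold dl. pose proof (pos_INR n). apply Rdiv_lt_0_compat; [apply Rinv_0_lt_compat|]; lra. }
    assert (EX : forall n, exists x, dom A x /\
       hnorm (hsub y (app T x)) + hnorm (hsub (app B y) (app B (app T x))) < dl n).
    { intros n. destruct (coreA y (dl n) dBy (dl0 n)) as [z [[x [dA Tx]] Hz]].
      exists x. subst z. auto. }
    set (xs := fun n => proj1_sig (constructive_indefinite_description _ (EX n))).
    assert (Hxs : forall n, dom A (xs n) /\
       hnorm (hsub y (app T (xs n))) + hnorm (hsub (app B y) (app B (app T (xs n)))) < dl n).
    { intros n. exact (proj2_sig (constructive_indefinite_description _ (EX n))). }
    assert (dlb : forall n, dl n <= / (INR n + 1)).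
    { intros n. unfold dl. pose proof (pos_INR n).
      assert (0 < / (INR n + 1)) by (apply Rinv_0_lt_compat; lra).
      unfold Rdiv. rewrite <- (Rmult_1_r (/ (INR n + 1))) at 2.
      apply Rmult_le_compat_l; [lra|]. rewrite <- Rinv_1. apply Rinv_le_contravar; lra. }
    assert (B1 : forall n, hnorm (xs n) <= / (INR n + 1)).
    { intros n. destruct (Hxs n) as [dA Hn].
      set (x := xs n) in *. set (z := app T x) in *.
      set (w := shift_app A l x).
      assert (dTl : dom T (hscal l x)) by auto.
      destruct (T_sub _ _ T linT (app A x) (hscal l x) (AAT x dA) dTl) as [dw Tw].
      fold (shift_app A l x) w in dw, Tw.
      rewrite asc, <- comm in Tw by auto. fold z in Tw.
      rewrite (sub_identity _ (app B z) (hscal l z) (hscal l y)) in Tw.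
      rewrite <- scal_sub, <- By in Tw.
      set (a := hsub (app B y) (app B z)) in *.
      set (b := hsub y z) in *.
      assert (Hb : hnorm b < dl n) by (pose proof (hnorm_ge0 _ a); lra).
      assert (Ha : hnorm a < dl n) by (pose proof (hnorm_ge0 _ b); lra).
      assert (Nb : nsq _ b <= dl n * dl n) by (rewrite <- hnorm_sq; pose proof (hnorm_ge0 _ b); nra).
      assert (Na : nsq _ a <= dl n * dl n) by (rewrite <- hnorm_sq; pose proof (hnorm_ge0 _ a); nra).
      assert (NT : nsq _ (app T w) <= (2 * lm + 2) * (dl n * dl n)).
      { rewrite Tw. eapply Rle_trans; [apply nsq_sub_le|]. rewrite nsq_scal. fold lm.
        pose proof (nsq_ge0 _ b). nra. }
      assert (HT : hnorm (app T w) <= Kc * dl n).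
      { unfold hnorm, Kc. fold (nsq _ (app T w)).
        rewrite <- (sqrt_square (dl n)) by (left; apply dl0).
        rewrite <- sqrt_mult_alt by lra. apply sqrt_le_1_alt. exact NT. }
      pose proof (Sb w) as S1. rewrite (SK x dA : S w = x) in S1.
      pose proof (Hinv w dw) as S2.
      assert (E : dl n * M = / (INR n + 1)).
      { unfold dl. pose proof (pos_INR n). field. lra. }
      rewrite <- E. unfold M in *.
      pose proof (dl0 n). pose proof (hnorm_ge0 _ w).
      assert (hnorm w <= c' * (Kc * dl n)) by (eapply Rle_trans; [exact S2|]; apply Rmult_le_compat_l; auto).
      assert (hnorm x <= c * (c' * (Kc * dl n))) by (eapply Rle_trans; [exact S1|]; apply Rmult_le_compat_l; auto).
      nra. }
    exfalso. apply yne.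
    assert (Cx : converges xs hzero).
    { intros eps He. destruct (conv_inv _ B1 eps He) as [N HN]. exists N. intros n Hn.
      rewrite sub0. auto. }
    assert (Cz : converges (fun n => app T (xs n)) y).
    { intros eps He.
      assert (Bz : forall n, hnorm (hsub (app T (xs n)) y) <= / (INR n + 1)).
      { intros n. destruct (Hxs n) as [_ Hn]. rewrite sub_swap, hnorm_opp.
        pose proof (hnorm_ge0 _ (hsub (app B y) (app B (app T (xs n))))).
        specialize (dlb n). lra. }
      exact (conv_inv _ Bz eps He). }
    destruct (clT xs hzero y (fun n => AT _ (proj1 (Hxs n))) Cx Cz) as [_ E].
    rewrite <- E. apply (T_zero _ _ T linT).
Qed.
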